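(* Assume the setting and hypotheses of part (ii) below, so that $A^L$ carries the product $(\alpha\cdot\beta)_g=\sum_{(h,k)}m_{h,k}(\alpha_h,\beta_k)$ ($(h,k)$ over representatives of $L_g$-orbits on $\{(h,k)\in G\times G\mid hk=g\}$). Let $g_1,\dots,g_t$ be representatives of the $L$-orbits on $G$, $L_i=L_{g_i}$, and use the additive isomorphism $A^L\cong\bigoplus_{i=1}^tA(g_i)^{L_i}$, under which $\alpha_i\in A(g_i)^{L_i}$ corresponds to $\sum_{y\in L/L_i}c_y(\alpha_i)\in A^L$. Let $\alpha_i\in A(g_i)^{L_i}$ and $\beta_j\in A(g_j)^{L_j}$. Let $D$ be a set of representatives of the double cosets $L_i\backslash L/L_j$, and for each $x\in D$ choose $k=k(x)\in\{1,\dots,t\}$ and $y=y(x)\in L$ with ${}^yg_i\,{}^{yx}g_j=g_k$. Then under this isomorphism $$\alpha_i\cdot\beta_j=\sum_{x\in D}m_{{}^yg_i,\,{}^{yx}g_j}\big(c_y(\alpha_i),\,c_{yx}(\beta_j)\big),$$ where the term indexed by $x$ lies in $A(g_{k(x)})$; i.e. the $A(g_k)^{L_k}$-component of $\alpha_i\cdot\beta_j$ is the sum of the terms with $k(x)=k$.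
   Context: Setting: $\Bbbk$ a commutative ring; $G,L$ finite groups with $L$ acting on $G$ by automorphisms ($x\cdot g={}^xg$, stabilizer $L_g$); free $\Bbbk$-modules $A(g)$ ($g\in G$) with $\Bbbk$-linear isomorphisms $c_{g,x}:A(g)\to A({}^xg)$ and bilinear maps $m_{g,h}:A(g)\times A(h)\to A(gh)$; $A=\bigoplus_g A(g)$, $c_x$ equal to $c_{g,x}$ on $A(g)$, $A^L$ the $L$-invariants; for $\alpha\in A$, $\alpha_g$ is its $A(g)$-component. (ii) The hypotheses: (H1) $c_1=\mathrm{id}$, $c_xc_y=c_{xy}$; (H2) $c_x\circ m_{g,h}=m_{{}^xg,{}^xh}\circ(c_x\times c_x)$; (H3) there is $1\in A(1)$, fixed by all $c_x$, which is a two-sided unit for the maps $m_{1,g},m_{g,1}$; (H4$'$) for all $g\in G$ and $\alpha,\beta,\gamma\in A^L$: $\sum_{(h,f)}\sum_{(d,e)}m_{h,f}(m_{d,e}(\alpha_d,\beta_e),\gamma_f)=\sum_{(d,k)}\sum_{(e,f)}m_{d,k}(\alpha_d,m_{e,f}(\beta_e,\gamma_f))$, with $(h,f)$ over representatives of $L_g$-orbits on pairs with $hf=g$, $(d,e)$ over representatives of $L_h$-orbits on pairs with $de=h$, $(d,k)$ over representatives of $L_g$-orbits on pairs with $dk=g$, $(e,f)$ over representatives of $L_k$-orbits on pairs with $ef=k$. *)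

(* Defs.v *)
From HB Require Import structures.
From mathcomp Require Import all_boot all_order all_algebra all_fingroup.
Set Implicit Arguments. Unset Strict Implicit. Unset Printing Implicit Defensive.
Import GRing.Theory.
Local Open Scope ring_scope.

Section Defs.
Variables (k : comPzRingType) (W : lmodType k) (G L : finGroupType).

Variable act : L -> G -> G.

Definition is_aut_action : Prop :=
  [/\ forall g, act 1%g g = g,
      forall x y g, act (x * y)%g g = act x (act y g)
    & forall x g h, act x (g * h)%g = (act x g * act x h)%g].

Definition stab (g : G) : {set L} := [set x | act x g == g].

Definition pairs_over (g : G) : {set G * G} := [set p | (p.1 * p.2)%g == g].

Definition act2 (x : L) (p : G * G) : G * G := (act x p.1, act x p.2).

Definition is_pair_reps (H : {set L}) (X R : {set G * G}) : Prop :=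
  [/\ R \subset X,
      forall p, p \in X -> exists2 r, r \in R & exists2 x, x \in H & p = act2 x r
    & forall r1 r2 x, r1 \in R -> r2 \in R -> x \in H -> r2 = act2 x r1 -> r1 = r2].

Definition pair_reps_family (R : G -> {set G * G}) : Prop :=
  forall g, is_pair_reps (stab g) (pairs_over g) (R g).

Definition is_orbit_reps (t : nat) (gs : 'I_t -> G) : Prop :=
  (forall h, exists i, exists y, act y (gs i) = h) /\
  (forall i j y, act y (gs i) = gs j -> i = j).

Definition is_lcoset_reps (H Y : {set L}) : Prop :=
  (forall z, exists2 y, y \in Y & exists2 a, a \in H & z = (y * a)%g) /\
  (forall y1 y2 a, y1 \in Y -> y2 \in Y -> a \in H -> y2 = (y1 * a)%g -> y1 = y2).

Definition is_dcoset_reps (H K D : {set L}) : Prop :=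
  (forall z, exists2 x, x \in D &
     exists a b, [/\ a \in H, b \in K & z = (a * x * b)%g]) /\
  (forall x1 x2 a b, x1 \in D -> x2 \in D -> a \in H -> b \in K ->
     x2 = (a * x1 * b)%g -> x1 = x2).

(* ---------- the modules A(g), realised as submodules S g of one module W ---------- *)
Variable S : G -> {pred W}.

Definition submod_family : Prop :=
  forall g, 0 \in S g /\
    (forall a u v, u \in S g -> v \in S g -> a *: u + v \in S g).

Definition free_in (P : {pred W}) : Prop :=
  exists (I : eqType) (b : I -> W),
    [/\ forall i, b i \in P,
        forall w, w \in P -> exists (s : seq I) (a : I -> k),
                              w = \sum_(i <- s) a i *: b i
      & forall (s : seq I) (a : I -> k), uniq s ->
          \sum_(i <- s) a i *: b i = 0 -> forall i, i \in s -> a i = 0].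

Variable c : G -> L -> W -> W.

Definition c_iso : Prop :=
  forall g x,
    [/\ forall u, u \in S g -> c g x u \in S (act x g),
        forall a u v, u \in S g -> v \in S g ->
          c g x (a *: u + v) = a *: c g x u + c g x v,
        forall v, v \in S (act x g) -> exists2 u, u \in S g & c g x u = v
      & forall u v, u \in S g -> v \in S g -> c g x u = c g x v -> u = v].

Variable m : G -> G -> W -> W -> W.

Definition m_bilinear : Prop :=
  forall g h,
    [/\ forall u v, u \in S g -> v \in S h -> m g h u v \in S (g * h)%g,
        forall a u u' v, u \in S g -> u' \in S g -> v \in S h ->
          m g h (a *: u + u') v = a *: m g h u v + m g h u' v
      & forall a u v v', u \in S g -> v \in S h -> v' \in S h ->
          m g h u (a *: v + v') = a *: m g h u v + m g h u v'].

Definition hypH1 : Prop :=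
  (forall g u, u \in S g -> c g 1%g u = u) /\
  (forall g x y u, u \in S g -> c (act y g) x (c g y u) = c g (x * y)%g u).

Definition hypH2 : Prop :=
  forall g h x u v, u \in S g -> v \in S h ->
    c (g * h)%g x (m g h u v) = m (act x g) (act x h) (c g x u) (c h x v).

Definition hypH3 : Prop :=
  exists2 e, e \in S 1%g &
    (forall x, c 1%g x e = e) /\
    (forall g u, u \in S g -> m 1%g g e u = u /\ m g 1%g u e = u).

(* elements of A (as their families of components) and of A^L *)
Definition inA (al : G -> W) : Prop := forall h, al h \in S h.
Definition inAL (al : G -> W) : Prop :=
  inA al /\ forall x h, c h x (al h) = al (act x h).

Definition hypH4' : Prop :=
  forall (g : G) (al be ga : G -> W), inAL al -> inAL be -> inAL ga ->
  forall (R1 : {set G * G}) (R2 : G -> {set G * G})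
         (R3 : {set G * G}) (R4 : G -> {set G * G}),
    is_pair_reps (stab g) (pairs_over g) R1 ->
    (forall h, is_pair_reps (stab h) (pairs_over h) (R2 h)) ->
    is_pair_reps (stab g) (pairs_over g) R3 ->
    (forall kk, is_pair_reps (stab kk) (pairs_over kk) (R4 kk)) ->
    \sum_(p in R1) \sum_(q in R2 p.1)
        m p.1 p.2 (m q.1 q.2 (al q.1) (be q.2)) (ga p.2)
    = \sum_(p in R3) \sum_(q in R4 p.2)
        m p.1 p.2 (al p.1) (m q.1 q.2 (be q.1) (ga q.2)).

Definition prodAL (R : G -> {set G * G}) (al be : G -> W) : G -> W :=
  fun g => \sum_(p in R g) m p.1 p.2 (al p.1) (be p.2).

Definition transfer (Y : {set L}) (gi : G) (u : W) : G -> W :=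
  fun h => \sum_(y in Y | act y gi == h) c gi y u.

End Defs.

(* Main.v *)
Require Import Defs.
From HB Require Import structures.
From mathcomp Require Import all_boot all_order all_algebra all_fingroup.
Import GRing.Theory.
Local Open Scope ring_scope.

Theorem corollary2p2 (k : comPzRingType) (W : lmodType k) (G L : finGroupType)
    (act : L -> G -> G) (S : G -> {pred W}) (c : G -> L -> W -> W)
    (m : G -> G -> W -> W -> W) :
  is_aut_action act ->
  submod_family S ->
  (forall g, free_in (S g)) ->
  c_iso act S c ->
  m_bilinear S m ->
  hypH1 act S c ->
  hypH2 act S c m ->
  hypH3 S c m ->
  hypH4' act S c m ->
  forall (t : nat) (gs : 'I_t -> G), is_orbit_reps act gs ->
  forall R : G -> {set G * G}, pair_reps_family act R ->
  forall (i j : 'I_t) (Yi Yj : {set L}),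
    is_lcoset_reps (stab act (gs i)) Yi ->
    is_lcoset_reps (stab act (gs j)) Yj ->
  forall ai bj : W,
    ai \in S (gs i) -> (forall x, x \in stab act (gs i) -> c (gs i) x ai = ai) ->
    bj \in S (gs j) -> (forall x, x \in stab act (gs j) -> c (gs j) x bj = bj) ->
  forall D : {set L}, is_dcoset_reps (stab act (gs i)) (stab act (gs j)) D ->
  forall (kk : L -> 'I_t) (yy : L -> L),
    (forall x, x \in D ->
       (act (yy x) (gs i) * act (yy x * x)%g (gs j))%g = gs (kk x)) ->
  forall l : 'I_t,
    prodAL m R (transfer act c Yi (gs i) ai) (transfer act c Yj (gs j) bj) (gs l)
    = \sum_(x in D | kk x == l)
        m (act (yy x) (gs i)) (act (yy x * x)%g (gs j))
          (c (gs i) (yy x) ai) (c (gs j) (yy x * x)%g bj).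
Proof.
move=> [act1 actM actmul] Hsub _ Hc Hm [c1 cM] H2 [e eS [ce eunit]] H4
  t gs [_ orbU] R HR i j Yi Yj HYi HYj ai bj aiS aiinv bjS bjinv D HD kk yy Hk l.
have actV : forall (x : L) g, act x^-1%g (act x g) = g.
  by move=> x g; rewrite -actM mulVg act1.
have actVr : forall (x : L) g, act x (act x^-1%g g) = g.
  by move=> x g; rewrite -actM mulgV act1.
have act1g : forall x, act x 1%g = 1%g.
  by move=> x; apply: (mulgI (act x 1%g)); rewrite mulg1 -actmul mulg1.
have stabP : forall (a : L) g, (a \in stab act g) = (act a g == g).
  by move=> a g; rewrite inE.
have stabV : forall (a : L) g, a \in stab act g -> a^-1%g \in stab act g.
  move=> a g; rewrite !stabP => /eqP E; apply/eqP.
  by rewrite -{1}E actV.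
have stabM : forall (a b : L) g, a \in stab act g -> b \in stab act g -> (a * b)%g \in stab act g.
  move=> a b g; rewrite !stabP => /eqP Ea /eqP Eb; apply/eqP.
  by rewrite actM Eb Ea.
have stabE : forall (a : L) g, a \in stab act g -> act a g = g.
  by move=> a g; rewrite stabP => /eqP.
have zeroS : forall g, 0 \in S g by move=> g; case: (Hsub g).
have addS : forall g u v, u \in S g -> v \in S g -> u + v \in S g.
  by move=> g u v uS vS; case: (Hsub g) => _ /(_ 1 u v uS vS); rewrite scale1r.
have sumS : forall g (I : finType) (P : pred I) (F : I -> W),
    (forall x, P x -> F x \in S g) -> \sum_(x | P x) F x \in S g.
  move=> g I P F HF; apply: (big_ind (fun w => w \in S g)) => //; exact: addS.
have m0l : forall g h v, v \in S h -> m g h 0 v = 0.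
  move=> g h v vS; case: (Hm g h) => _ /(_ 1 0 0 v (zeroS _) (zeroS _) vS) + _.
  rewrite !scale1r addr0 => E.
  by apply: (@addrI _ (m g h 0 v)); rewrite addr0 -E.
have m0r : forall g h u, u \in S g -> m g h u 0 = 0.
  move=> g h u uS; case: (Hm g h) => _ _ /(_ 1 u 0 0 uS (zeroS _) (zeroS _)).
  rewrite !scale1r addr0 => E.
  by apply: (@addrI _ (m g h u 0)); rewrite addr0 -E.
have c0 : forall g x, c g x 0 = 0.
  move=> g x; case: (Hc g x) => _ /(_ 1 0 0 (zeroS _) (zeroS _)) + _ _.
  rewrite !scale1r addr0 => E.
  by apply: (@addrI _ (c g x 0)); rewrite addr0 -E.
have trP : forall (gi : G) (Y : {set L}) (u : W),
    is_lcoset_reps (stab act gi) Y -> u \in S gi ->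
    (forall x, x \in stab act gi -> c gi x u = u) ->
    (forall y, transfer act c Y gi u (act y gi) = c gi y u) /\
    (forall h, (forall y, act y gi != h) -> transfer act c Y gi u h = 0).
  move=> gi Y u [Ycov Yun] uS uinv; split; last first.
    move=> h hh; rewrite /transfer; apply: big1 => z /andP[_ E].
    by move: (hh z); rewrite E.
  move=> y; case: (Ycov y) => z zY [a aH ->]; rewrite /transfer (big_pred1 z).
    by rewrite -cM // (stabE _ _ aH) (uinv a aH).
  move=> z' /=; apply/andP/eqP.
    case=> z'Y /eqP E; symmetry.
    apply: (Yun z z' (z^-1 * z')%g zY z'Y); last by rewrite mulKVg.
    by rewrite stabP actM E actM (stabE _ _ aH) actV.
  by move->; rewrite zY actM (stabE _ _ aH) eqxx.
have inALtr : forall (gi : G) (Y : {set L}) (u : W),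
    is_lcoset_reps (stab act gi) Y -> u \in S gi ->
    (forall x, x \in stab act gi -> c gi x u = u) ->
    inAL act S c (transfer act c Y gi u).
  move=> gi Y u HY uS uinv; have [P1 P2] := trP gi Y u HY uS uinv.
  split.
    move=> h; case: (boolP [exists y, act y gi == h]).
      by case/existsP=> y /eqP <-; rewrite P1; case: (Hc gi y) => cS *; apply: cS.
    by move/existsPn=> hh; rewrite P2.
  move=> x h; case: (boolP [exists y, act y gi == h]).
    by case/existsP=> y /eqP <-; rewrite P1 -actM P1 cM.
  move/existsPn=> hh; rewrite P2 // c0 P2 // => y; apply/negP => /eqP E.
  by move: (hh (x^-1 * y)%g); rewrite actM E actV eqxx.
pose al := transfer act c Yi (gs i) ai.
pose be := transfer act c Yj (gs j) bj.
have alL : inAL act S c al by apply: inALtr.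
have beL : inAL act S c be by apply: inALtr.
have [alP1 alP2] := trP _ _ _ HYi aiS aiinv.
have [beP1 beP2] := trP _ _ _ HYj bjS bjinv.
pose ga := fun h : G => if h == 1%g then e else 0.
have gaL : inAL act S c ga.
  split.
    by move=> h; rewrite /ga; case: eqP => [->|_].
  move=> x h; rewrite /ga; case: eqP => [->|/eqP nh].
    by rewrite act1g eqxx ce.
  rewrite c0; case: eqP => // E; move: nh; rewrite -(actV x h) E act1g eqxx.
  done.
have R1P : forall h, (h, 1%g) \in R h.
  move=> h; case: (HR h) => Rsub Rcov _.
  have : (h, 1%g) \in pairs_over h by rewrite inE /= mulg1.
  case/Rcov => r rR [a aH E].
  have -> : (h, 1%g) = r.
    have -> : r = act2 act a^-1%g (h, 1%g) by rewrite E /act2 /= !actV; case: r {rR E}.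
    by rewrite /act2 /= act1g (stabE _ _ (stabV _ _ aH)).
  done.
have R1U : forall h p, p \in R h -> p.2 = 1%g -> p = (h, 1%g).
  move=> h [p1 p2] pR /= E; case: (HR h) => Rsub _ _.
  by move: (subsetP Rsub _ pR); rewrite inE /= E mulg1 => /eqP->.
have sumR1 : forall h0 (F0 : G * G -> W),
    (forall p, p \in R h0 -> p.2 != 1%g -> F0 p = 0) -> \sum_(p in R h0) F0 p = F0 (h0, 1%g).
  move=> h0 F0 HF; rewrite (bigD1 (h0, 1%g)) ?R1P //= big1 ?addr0 //.
  move=> p /andP[pR ne].
  apply: HF => //; apply/negP => /eqP E; by rewrite (R1U h0 p pR E) eqxx in ne.
have mS : forall h q u v, q \in R h -> u \in S q.1 -> v \in S q.2 -> m q.1 q.2 u v \in S h.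
  move=> h q u v qR uS vS; case: (HR h) => Rsub _ _.
  move: (subsetP Rsub _ qR); rewrite inE => /eqP <-.
  by case: (Hm q.1 q.2) => + _ _; apply.
pose T := fun p : G * G => m p.1 p.2 (al p.1) (be p.2).
have repchange : forall g (R' : {set G * G}), is_pair_reps act (stab act g) (pairs_over g) R' ->
    \sum_(p in R g) T p = \sum_(p in R') T p.
  move=> g R' HR'; move: (H4 g al be ga alL beL gaL (R g) R R' R (HR g) HR HR' HR) => H.
  rewrite (sumR1 g) in H; last first.
    move=> p pR ne /=; apply: big1 => q qR; rewrite /ga (negbTE ne) m0r //.
    case: (HR g) => Rsub _ _; move: (subsetP Rsub _ pR); rewrite inE => /eqP E.
    by apply: mS qR _ _; [case: alL | case: beL].
  move: H; rewrite /= {1}/ga eqxx.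
  have -> : \sum_(q in R g) m g 1%g (m q.1 q.2 (al q.1) (be q.2)) e = \sum_(p in R g) T p.
    apply: eq_bigr => q qR; have [_ ->] // := eunit g _ (mS g q _ _ qR (proj1 alL _) (proj1 beL _)).
  move=> ->; apply: eq_bigr => p pR.
  rewrite (sumR1 p.2) /=; last first.
    move=> q qR ne; rewrite /ga (negbTE ne) m0r //; first by apply: m0r; case: alL.
    by case: beL.
  rewrite /ga eqxx; have [_ ->] := eunit p.2 (be p.2) (proj1 beL _).
  done.
pose g := gs l.
pose q := fun x : L => (act (yy x) (gs i), act (yy x * x)%g (gs j)).
pose rel := fun (p : G * G) (x : L) => [exists a in stab act g, p == act2 act a (q x)].
have act2M : forall (a b : L) p, act2 act (a * b)%g p = act2 act a (act2 act b p).
  by move=> a b p; rewrite /act2 !actM.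
have act2V : forall (a : L) p, act2 act a^-1%g (act2 act a p) = p.
  by move=> a [p1 p2]; rewrite /act2 /= !actV.
have act21 : forall p, act2 act 1%g p = p.
  by move=> [p1 p2]; rewrite /act2 /= !act1.
have Kq : forall x1 x2 (a : L), x1 \in D -> x2 \in D -> act2 act a (q x1) = q x2 -> x1 = x2.
  move=> x1 x2 a x1D x2D; rewrite /act2 /q /= => -[E1 E2].
  set y1 := yy x1 in E1 E2; set y2 := yy x2 in E1 E2.
  have bS : (y2^-1 * a * y1)%g \in stab act (gs i).
    by rewrite stabP !actM E1 actV.
  have cS : ((y2 * x2)^-1 * a * (y1 * x1))%g \in stab act (gs j).
    rewrite !actM in E2; rewrite stabP !actM E2 -[act y2 (act x2 (gs j))]actM.
    by rewrite -actM mulVg act1.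
  apply: esym; apply: ((proj2 HD) x2 x1 _ _ x2D x1D (stabV _ _ bS) cS).
  rewrite !invMg !invgK !mulgA.
  by rewrite mulgK mulgK mulgVK mulVg mul1g.
have EX : forall p, p \in pairs_over g ->
    [exists y, act y (gs i) == p.1] -> [exists w, act w (gs j) == p.2] ->
    exists2 x, x \in D & (kk x == l) && rel p x.
  move=> [p1 p2] pX /existsP[z /eqP E1] /existsP[w /eqP E2] /=.
  rewrite /= in E1 E2.
  case: ((proj1 HD) (z^-1 * w)%g) => x xD [a' [b' [aS bS E]]].
  pose u := (z * a' * (yy x)^-1)%g.
  have pu : act2 act u (q x) = (p1, p2).
    rewrite /act2 /q /= -!actM /u mulgVK !mulgA mulgVK.
    rewrite actM (stabE _ _ aS) E1 -E2; congr (_, _).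
    have -> : w = (z * a' * x * b')%g by rewrite -!mulgA (mulgA a') -E mulKVg.
    by rewrite (actM _ b') (stabE _ _ bS).
  have kl : kk x = l.
    apply: (orbU _ _ u); move: pX; rewrite inE /= /g => /eqP <-.
    by rewrite -(Hk x xD) actmul; case: pu => -> ->.
  exists x => //; rewrite kl eqxx /=; apply/existsP; exists u.
  rewrite pu eqxx andbT stabP /g -kl -(Hk x xD) actmul.
  by case: pu => -> ->; rewrite (Hk x xD) kl; move: pX; rewrite inE.
pose f := fun p : G * G =>
  if [pick x in D | (kk x == l) && rel p x] is Some x then q x else p.
have f_spec : forall p, exists2 a, a \in stab act g & f p = act2 act a p.
  move=> p; rewrite /f; case: pickP => [x /andP[xD /andP[_ /existsP[a /andP[aS /eqP E]]]] | _].
    by exists a^-1%g; [exact: stabV | rewrite E act2V].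
  by exists 1%g; [rewrite stabP act1 | rewrite act21].
have [Rsub Rcov Run] := HR g.
have repsf : is_pair_reps act (stab act g) (pairs_over g) (f @: R g).
  split.
  - apply/subsetP => _ /imsetP[p pR ->]; have [a aS ->] := f_spec p.
    rewrite inE /act2 /= -actmul; move: (subsetP Rsub _ pR); rewrite inE => /eqP ->.
    by rewrite (stabE _ _ aS).
  - move=> p pX; case: (Rcov p pX) => r rR [x xS E]; exists (f r).
      by apply/imsetP; exists r.
    have [a aS Efr] := f_spec r; exists (x * a^-1)%g; first by rewrite stabM // stabV.
    by rewrite Efr act2M act2V.
  - move=> _ _ x /imsetP[r1 r1R ->] /imsetP[r2 r2R ->] xS E.
    have [a1 a1S E1] := f_spec r1; have [a2 a2S E2] := f_spec r2.
    rewrite E1 E2 in E; have E' : r2 = act2 act (a2^-1 * x * a1)%g r1.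
      by rewrite !act2M -E act2V.
    by rewrite (Run r1 r2 _ r1R r2R _ E') // !stabM // stabV.
have finj : {in R g &, injective f}.
  move=> r1 r2 r1R r2R E.
  have [a1 a1S E1] := f_spec r1; have [a2 a2S E2] := f_spec r2.
  rewrite E1 E2 in E; have E' : r2 = act2 act (a2^-1 * a1)%g r1.
    by rewrite act2M E act2V.
  by rewrite (Run r1 r2 _ r1R r2R _ E') // stabM // stabV.
have step1 : forall p, p \in R g ->
    T (f p) = \sum_(x in D | kk x == l) (if rel p x then T (q x) else 0).
  move=> p pR; rewrite /f; case: pickP => [x /andP[xD /andP[kx rx]] | none].
    rewrite -big_mkcondr (big_pred1 x) // => x' /=.
    apply/idP/eqP => [/andP[/andP[x'D _] rx'] | ->]; last by rewrite xD kx rx.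
    move: rx rx' => /existsP[a /andP[aS /eqP Ea]] /existsP[b /andP[bS /eqP Eb]].
    apply: (Kq x' x (a^-1 * b)%g x'D xD).
    by rewrite act2M -Eb Ea act2V.
  rewrite big1; last first.
    move=> x' /andP[x'D kx']; have := none x'; rewrite /= x'D kx' /= => ->.
    done.
  rewrite /T; case: (boolP [exists y, act y (gs i) == p.1]) => ex1; last first.
    rewrite /al alP2 ?m0l //; first exact: (proj1 beL).
    by move=> y; apply: (existsPn ex1).
  case: (boolP [exists w, act w (gs j) == p.2]) => ex2; last first.
    rewrite /be beP2 ?m0r //; first exact: (proj1 alL).
    by move=> y; apply: (existsPn ex2).
  have [x xD /andP[kx rx]] := EX p (subsetP Rsub _ pR) ex1 ex2.
  by have := none x; rewrite /= xD kx rx.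
rewrite /prodAL -/al -/be.
change (\sum_(p in R g) T p = \sum_(x in D | kk x == l)
        m (act (yy x) (gs i)) (act (yy x * x)%g (gs j))
          (c (gs i) (yy x) ai) (c (gs j) (yy x * x)%g bj)).
rewrite (repchange _ _ repsf) big_imset //.
rewrite (eq_bigr _ step1) exchange_big /=.
apply: eq_bigr => x /andP[xD kx].
have qX : q x \in pairs_over g by rewrite inE /= Hk // (eqP kx).
case: (Rcov _ qX) => r rR [a aS Ea].
rewrite -big_mkcondr (big_pred1 r) /=; last first.
  move=> p /=; apply/idP/eqP => [/andP[pR /existsP[b /andP[bS /eqP Eb]]] | ->].
    symmetry; apply: (Run r p (b * a)%g rR pR); first by rewrite stabM.
    by rewrite act2M -Ea.
  rewrite rR /=; apply/existsP; exists a^-1%g.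
  by rewrite stabV //= Ea act2V eqxx.
by rewrite /T /q /al /be /= alP1 beP1.
Qed.
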